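(* Let $\mathcal C$ be a concept hierarchy, $r_1,r_2,\epsilon\in[0,1]$ with $r_1\le r_2(1-\epsilon)$, $m$ a positive integer, and let $\mathcal H$ be the network defined below with a fixed failed set $F$ satisfying the stated constraint. Then for every $B\subseteq C_0$ presented at time 0 and every concept $c$ with $c\notin supp_{r_1}(B)$, no neuron $v\in reps(c)$ fires at time $level(c)$.
   Context: Concept hierarchies: fix positive integers $\ell_{max},n,k$. A universal set $D$ of concepts is partitioned into disjoint sets $D_0,\dots,D_{\ell_{max}}$ with $|D_0|=n$; $level(c)=\ell$ for $c\in D_\ell$. A concept hierarchy $\mathcal C$ consists of $C\subseteq D$, with $C_\ell=C\cap D_\ell$, and for each $c\in C_\ell$ with $1\le\ell\le\ell_{max}$ a set $children(c)\subseteq C_{\ell-1}$, such that $|C_{\ell_{max}}|=k$, $|children(c)|=k$ for all such $c$, and $children(c)\cap children(c')=\emptyset$ for distinct $c,c'\in C_\ell$. For $B\subseteq D_0$ and $r\in[0,1]$: $B(0)=B\cap C_0$; for $1\le\ell\le\ell_{max}$, $B(\ell)=\{c\in C_\ell:|children(c)\cap B(\ell-1)|\ge rk\}$; $supp_r(B)=\bigcup_{\ell}B(\ell)$. Network $\mathcal H$: neurons partitioned into layers $N_0,\dots,N_{\ell_{max}}$. Each $c\in D_0$ has a set $reps(c)$ of $m$ neurons in $N_0$, each $c\in C$ with $level(c)\ge1$ a set $reps(c)$ of $m$ neurons in $N_{level(c)}$, all pairwise disjoint. For $u\in N_{\ell-1}$, $v\in N_\ell$: $w(u,v)=1$ iff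 $v\in reps(c)$ and $u\in reps(c')$ for a child $c'$ of $c$, else $0$. Threshold $\tau=r_2km(1-\epsilon)$. A fixed set $F$ of neurons is failed (failed neurons never fire), such that for every concept $c$ at least $m(1-\epsilon)$ neurons of $reps(c)$ are not in $F$. Input $B\subseteq C_0$ presented at time 0: a layer-0 neuron fires at time 0 iff it is in $\bigcup_{b\in B}reps(b)\setminus F$, and no layer-0 neuron fires at any other time. A non-failed $v\in N_\ell$, $\ell\ge1$, does not fire at time 0 and fires at time $t\ge1$ iff $\sum_{u\in N_{\ell-1}}w(u,v)x_u(t-1)\ge\tau$, where $x_u(s)\in\{0,1\}$ indicates whether $u$ fires at time $s$. *)

(* Defs.v *)
From mathcomp Require Import all_boot all_order all_algebra.
From mathcomp Require Import reals.
Import Order.TTheory GRing.Theory Num.Theory.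
Local Open Scope ring_scope.
Set Implicit Arguments.
Unset Strict Implicit.
Unset Printing Implicit Defensive.

Section Hierarchy.
Variables (D : finType) (level : D -> nat).

Definition Dlev (l : nat) : {set D} := [set c | level c == l].

(* C is a concept hierarchy with parameters lmax, n, k (children only
   meaningful for c in C with 1 <= level c <= lmax). *)
Definition concept_hierarchy (lmax n k : nat) (C : {set D})
  (children : D -> {set D}) : Prop :=
  [/\ (forall c : D, (level c <= lmax)%N),
      #|Dlev 0| = n,
      #|C :&: Dlev lmax| = k,
      (forall c, c \in C -> (1 <= level c <= lmax)%N ->
          [/\ children c \subset C :&: Dlev (level c).-1 & #|children c| = k])
    & (forall c c', c \in C -> c' \in C -> (1 <= level c <= lmax)%N ->
          level c' = level c -> c != c' ->
          [disjoint children c & children c'])].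

Fixpoint Blev (R : realType) (k : nat) (C : {set D}) (children : D -> {set D})
  (r : R) (B : {set D}) (l : nat) : {set D} :=
  match l with
  | 0 => B :&: (C :&: Dlev 0)
  | l'.+1 => [set c in C :&: Dlev l'.+1 |
               r * k%:R <= #|children c :&: @Blev R k C children r B l'|%:R]
  end.

Definition supp (R : realType) (lmax k : nat) (C : {set D})
  (children : D -> {set D}) (r : R) (B : {set D}) : {set D} :=
  \bigcup_(l < lmax.+1) @Blev R k C children r B l.

Definition has_reps (C : {set D}) (c : D) : bool := (level c == 0)%N || (c \in C).

Variables (N : finType) (layer : N -> nat).

Definition network_ok (lmax m : nat) (C : {set D}) (reps : D -> {set N}) : Prop :=
  [/\ (forall u : N, (layer u <= lmax)%N),
      (forall c, has_reps C c -> #|reps c| = m),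
      (forall c, has_reps C c -> forall u, u \in reps c -> layer u = level c)
    & (forall c c', has_reps C c -> has_reps C c' -> c != c' ->
          [disjoint reps c & reps c'])].

Definition weight (lmax : nat) (C : {set D}) (children : D -> {set D})
  (reps : D -> {set N}) (u v : N) : bool :=
  [exists c, [&& c \in C, (1 <= level c <= lmax)%N, v \in reps c &
                 [exists c', (c' \in children c) && (u \in reps c')]]].

Definition failure_ok (R : realType) (m : nat) (eps : R) (C : {set D})
  (reps : D -> {set N}) (F : {set N}) : Prop :=
  forall c, has_reps C c -> m%:R * (1 - eps) <= #|reps c :\: F|%:R.

Definition tau (R : realType) (k m : nat) (r2 eps : R) : R :=
  r2 * k%:R * m%:R * (1 - eps).

Fixpoint fires (R : realType) (lmax k m : nat) (C : {set D})
  (children : D -> {set D}) (reps : D -> {set N}) (F : {set N})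
  (r2 eps : R) (B : {set D}) (t : nat) (v : N) : bool :=
  match t with
  | 0 => [&& layer v == 0%N, v \in \bigcup_(b in B) reps b & v \notin F]
  | t'.+1 => [&& (1 <= layer v)%N, v \notin F &
              @tau R k m r2 eps <=
                \sum_(u : N | layer u == (layer v).-1)
                   (weight lmax C children reps u v)%:R *
                   (@fires R lmax k m C children reps F r2 eps B t' u)%:R]
  end.

End Hierarchy.

(* Main.v *)
Require Import Defs.
From mathcomp Require Import all_boot all_order all_algebra.
From mathcomp Require Import reals.
From mathcomp Require Import ring.
Import Order.TTheory GRing.Theory Num.Theory.
Local Open Scope ring_scope.

Theorem theorem7p4 (R : realType) (lmax n k m : nat)
  (D : finType) (level : D -> nat) (C : {set D}) (children : D -> {set D})
  (N : finType) (layer : N -> nat) (reps : D -> {set N}) (F : {set N})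
  (r1 r2 eps : R) :
  (0 < lmax)%N -> (0 < n)%N -> (0 < k)%N -> (0 < m)%N ->
  concept_hierarchy level lmax n k C children ->
  network_ok level layer lmax m C reps ->
  failure_ok level m eps C reps F ->
  0 <= r1 <= 1 -> 0 <= r2 <= 1 -> 0 <= eps <= 1 ->
  r1 <= r2 * (1 - eps) ->
  forall B : {set D}, B \subset C :&: Dlev level 0 ->
  forall c : D, has_reps level C c ->
  c \notin supp level lmax k C children r1 B ->
  forall v, v \in reps c ->
  ~~ fires level layer lmax k m C children reps F r2 eps B (level c) v.
Proof.
move=> _ _ kpos mpos [Hlev _ _ Hch _] [_ Hcard Hlay Hdisj] _ _ _ _ Hr B HB c Hc Hsupp.
have key : forall l c, has_reps level C c -> level c = l ->
    c \notin Blev level k C children r1 B l -> forall v, v \in reps c ->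
    ~~ fires level layer lmax k m C children reps F r2 eps B l v.
  elim=> [|l IH] d Hd Hl HnB v Hv.
    rewrite /= negb_and; apply/orP; right; rewrite negb_and; apply/orP; left.
    apply/bigcupP => -[b Hb Hvb].
    have Hb0 : b \in C :&: Dlev level 0 by apply: (subsetP HB).
    have Hbr : has_reps level C b by rewrite /has_reps; move: Hb0; rewrite !inE => /andP[_ ->].
    case: (eqVneq d b) => [Ecb|Ncb].
      by move: HnB; rewrite /= Ecb inE Hb Hb0.
    by move: (disjointFr (Hdisj _ _ Hd Hbr Ncb) Hv); rewrite Hvb.
  have HdC : d \in C by move: Hd; rewrite /has_reps Hl /=.
  have Hl1 : (1 <= level d <= lmax)%N by rewrite {1}Hl /= Hlev.
  have [Hsub Hk] := Hch d HdC Hl1.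
  set X := children d :&: Blev level k C children r1 B l.
  have HX : (#|X|%:R < r1 * k%:R :> R).
    rewrite ltNge; apply/negP => H; move: HnB => /negP; apply.
    rewrite /= inE; apply/andP; split=> //; by rewrite !inE HdC Hl eqxx.
  rewrite /= negb_and; apply/orP; right; rewrite negb_and; apply/orP; right.
  rewrite -ltNge.
  apply: (le_lt_trans (y := \sum_(u : N) \sum_(d' in X) (u \in reps d')%:R)).
    apply: (le_trans (y := \sum_(u : N | layer u == (layer v).-1) \sum_(d' in X) (u \in reps d')%:R)).
      apply: ler_sum => u Hu.
      case Hw: (weight _ _ _ _ _ u v); last by rewrite mul0r sumr_ge0.
      case Hf: (fires _ _ _ _ _ _ _ _ _ _ _ _ _ u); last by rewrite mulr0 sumr_ge0.
      rewrite mul1r.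
      move: Hw => /existsP[d'' /and4P[Hd'' Hl'' Hv'' /existsP[d' /andP[Hd' Hu']]]].
      have Hr'' : has_reps level C d'' by rewrite /has_reps Hd'' orbT.
      have Ec : d'' = d.
        apply/eqP; apply/negPn/negP => Ne.
        by move: (disjointFr (Hdisj _ _ Hr'' Hd Ne) Hv''); rewrite Hv.
      subst d''.
      have Hd'0 : d' \in C :&: Dlev level (level d).-1 by apply: (subsetP Hsub).
      move: Hd'0; rewrite !inE Hl /= => /andP[Hd'C /eqP Hl'].
      have Hr' : has_reps level C d' by rewrite /has_reps Hd'C orbT.
      have HcX : d' \in X.
        rewrite inE Hd' /=; apply/negPn/negP => Hn.
        by move: (IH d' Hr' Hl' Hn u Hu'); rewrite Hf.
      by rewrite (bigD1 d') //= Hu' -[X in X <= _]addr0 lerD2l sumr_ge0 //.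
    rewrite [Y in _ <= Y](bigID (fun u => layer u == (layer v).-1)) /= lerDl.
    by apply: sumr_ge0 => i _; apply: sumr_ge0.
  rewrite exchange_big /=.
  have -> : \sum_(d' in X) \sum_(u : N) (u \in reps d')%:R = \sum_(d' in X) (m%:R : R).
    apply: eq_bigr => d' Hd'.
    have Hr' : has_reps level C d'.
      rewrite /has_reps; move: Hd'; rewrite inE => /andP[H _]; move: (subsetP Hsub _ H); rewrite inE => /andP[-> _].
      by rewrite orbT.
    rewrite -(Hcard _ Hr') -sum1_card natr_sum big_mkcond /=.
    by rewrite [RHS]big_mkcond /=; apply: eq_bigr => u _; case: (u \in reps d').
  have -> : \sum_(d' in X) (m%:R : R) = #|X|%:R * m%:R by rewrite sumr_const mulr_natl.
  rewrite /tau.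
  have Hm : (0 : R) < m%:R by rewrite ltr0n.
  apply: (lt_le_trans (y := r1 * k%:R * m%:R)); first by rewrite ltr_pM2r.
  have -> : r2 * k%:R * m%:R * (1 - eps) = (r2 * (1 - eps)) * (k%:R * m%:R).
    by ring.
  rewrite -mulrA ler_wpM2r //.
  by rewrite mulr_ge0 // ler0n.
apply: key => //.
apply/negP => H; move/negP: Hsupp; apply.
apply/bigcupP; exists (Ordinal (n:=lmax.+1) (Hlev c : (level c < lmax.+1)%N)) => //.
Qed.
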